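(* Let $G'$ be a cubic graph, and let $G$ be a cubic graph obtained from $G'$ by replacing one edge of $G'$ with a string of diamonds. Then $r_3(G)=r_3(G')$.
   Context: Graphs are finite, without loops, possibly with multiple edges; cubic means every vertex has degree $3$. For a cubic graph $G$, $\nu_3(G)$ is the maximum number of edges of a $3$-edge-colorable subgraph, and the resistance is $r_3(G)=|E(G)|-\nu_3(G)$. A diamond is a graph isomorphic to $K_4$ minus an edge; it has two vertices of degree $2$. Replacing an edge $a=uv$ of $G'$ with a string of $k\geq 1$ diamonds means: delete $a$, add $k$ vertex-disjoint new diamonds $D_1,\dots,D_k$, and add edges joining $u$ to a degree-$2$ vertex of $D_1$, the other degree-$2$ vertex of $D_i$ to a degree-$2$ vertex of $D_{i+1}$ for $1\le i<k$, and the other degree-$2$ vertex of $D_k$ to $v$ (so $6k+1$ new edges replace $a$ and the result is cubic). *)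

(* Defs.v *)
From mathcomp Require Import all_boot.
Set Implicit Arguments. Unset Strict Implicit. Unset Printing Implicit Defensive.

Section Graphs.
Variables (V E : finType) (ends : E -> V * V).

Definition incident (v : V) (e : E) : bool :=
  ((ends e).1 == v) || ((ends e).2 == v).

Definition loopless : Prop := forall e, (ends e).1 != (ends e).2.

Definition cubic : Prop :=
  loopless /\ forall v : V, #|[set e | incident v e]| = 3.

Definition adjacent_edges (e f : E) : bool :=
  (e != f) && [exists v, incident v e && incident v f].

Definition colorable3 (S : {set E}) : bool :=
  [exists c : {ffun E -> 'I_3},
     [forall e in S, forall f in S, adjacent_edges e f ==> (c e != c f)]].

Definition nu3 : nat := \max_(S : {set E} | colorable3 S) #|S|.

Definition r3 : nat := #|E| - nu3.
End Graphs.

(* Replacing the edge a = uv of G' by a string of n := k.+1 diamonds. *)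
Section Diamonds.
Variables (V' E' : finType) (ends' : E' -> V' * V') (a : E') (k : nat).

(* diamond i has vertices (i,0),(i,1),(i,2),(i,3); (i,0),(i,3) have degree 2 *)
Definition dvert := ('I_k.+1 * 'I_4)%type.
Definition rep_vert := (V' + dvert)%type.

(* old edges other than a; 5 edges per diamond; k.+2 connecting edges *)
Definition rep_edge :=
  ({e : E' | e != a} + ('I_k.+1 * 'I_5) + 'I_k.+2)%type.

(* the 5 edges of K4 minus the edge {0,3} *)
Definition diamond_ends (j : 'I_5) : 'I_4 * 'I_4 :=
  match nat_of_ord j with
  | 0 => (inord 0, inord 1)
  | 1 => (inord 0, inord 2)
  | 2 => (inord 1, inord 2)
  | 3 => (inord 1, inord 3)
  | _ => (inord 2, inord 3)
  end.

(* connecting edge i: u -- D_0, D_{i-1} -- D_i, D_k -- v *)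
Definition connector_ends (i : 'I_k.+2) : rep_vert * rep_vert :=
  ((if nat_of_ord i == 0 then inl (ends' a).1
    else inr (inord i.-1 : 'I_k.+1, inord 3 : 'I_4)),
   (if nat_of_ord i == k.+1 then inl (ends' a).2
    else inr (inord i : 'I_k.+1, inord 0 : 'I_4))).

Definition rep_ends (x : rep_edge) : rep_vert * rep_vert :=
  match x with
  | inl (inl e) => (inl (ends' (val e)).1, inl (ends' (val e)).2)
  | inl (inr (i, j)) => (inr (i, (diamond_ends j).1), inr (i, (diamond_ends j).2))
  | inr i => connector_ends i
  end.
End Diamonds.
Arguments rep_ends {V' E'} ends' a k x.

Definition mgraph_iso (V E Vc Ec : finType) (ends : E -> V * V)
  (endsc : Ec -> Vc * Vc) : Prop :=
  exists (f : V -> Vc) (g : E -> Ec),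
    [/\ bijective f, bijective g &
        forall e, endsc (g e) = (f (ends e).1, f (ends e).2) \/
                  endsc (g e) = (f (ends e).2, f (ends e).1)].

(* Main.v *)
Require Import Defs.
From mathcomp Require Import all_boot zify.
Set Implicit Arguments. Unset Strict Implicit. Unset Printing Implicit Defensive.

Section General.
Variables (V E : finType) (ends : E -> V * V).

Lemma colorableI (S : {set E}) (c : {ffun E -> 'I_3}) :
  (forall w x y, x \in S -> y \in S -> x != y ->
     incident ends w x -> incident ends w y -> c x != c y) ->
  colorable3 ends S.
Proof.
move=> H; apply/existsP; exists c; apply/forallP => x; apply/implyP => Hx.
apply/forallP => y; apply/implyP => Hy; apply/implyP.
case/andP => Hxy /existsP [w /andP [I1 I2]]; exact: (H w).
Qed.

Lemma colorableE (S : {set E}) : colorable3 ends S ->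
  exists c : {ffun E -> 'I_3}, forall w x y, x \in S -> y \in S -> x != y ->
     incident ends w x -> incident ends w y -> c x != c y.
Proof.
case/existsP => c /forallP H; exists c => w x y Hx Hy Hxy I1 I2.
move: (H x); rewrite Hx /= => /forallP /(_ y); rewrite Hy /= => /implyP; apply.
by rewrite /adjacent_edges Hxy; apply/existsP; exists w; rewrite I1 I2.
Qed.

Lemma card_set_sum (T1 T2 : finType) (S : {set T1 + T2}) :
  #|S| = #|[set x | inl x \in S]| + #|[set y | inr y \in S]|.
Proof.
have HS : S = inl @: [set x | inl x \in S] :|: inr @: [set y | inr y \in S].
  apply/setP => [[x|y]]; rewrite !inE; apply/idP/idP.
  - by move=> H; apply/orP; left; apply/imsetP; exists x; rewrite ?inE.
  - by case/orP => /imsetP [z]; rewrite inE => ? [->].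
  - by move=> H; apply/orP; right; apply/imsetP; exists y; rewrite ?inE.
  - by case/orP => /imsetP [z]; rewrite inE => ? [->].
rewrite {1}HS cardsU.
have -> : inl @: [set x | inl x \in S] :&: inr @: [set y | inr y \in S] = set0.
  apply/setP => z; rewrite !inE.
  by apply/andP => -[/imsetP [? _ ->] /imsetP [? _]].
rewrite cards0 subn0 !card_imset //; by move=> ? ? [].
Qed.

End General.

Section Iso.
Variables (V E Vc Ec : finType) (ends : E -> V * V) (endsc : Ec -> Vc * Vc).

Lemma iso_le (f : V -> Vc) (g : E -> Ec) : bijective f -> bijective g ->
  (forall e, endsc (g e) = (f (ends e).1, f (ends e).2) \/
             endsc (g e) = (f (ends e).2, f (ends e).1)) ->
  nu3 ends <= nu3 endsc.
Proof.
move=> [f' ff' f'f] [g' gg' g'g] He.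
have finj : injective f by apply: can_inj ff'.
have ginj : injective g by apply: can_inj gg'.
have Hinc : forall w e, incident endsc w (g e) = incident ends (f' w) e.
  move=> w e; rewrite /incident.
  rewrite -{1 2}(f'f w).
  by case: (He e) => ->; rewrite /= !(inj_eq finj) // orbC.
apply/bigmax_leqP => S HS.
have -> : #|S| = #|g @: S| by rewrite card_imset.
apply: leq_bigmax_cond.
case: (colorableE HS) => c Hc.
apply: (@colorableI _ _ _ _ [ffun x => c (g' x)]) => w x y.
move=> /imsetP [x0 Hx0 ->] /imsetP [y0 Hy0 ->] Hxy.
rewrite !Hinc !ffunE !gg' => I1 I2.
apply: (Hc (f' w)) => //; apply: contra Hxy => /eqP -> //.
Qed.

End Iso.
Lemma iso_eq (V E Vc Ec : finType) (ends : E -> V * V) (endsc : Ec -> Vc * Vc) (f : V -> Vc) (g : E -> Ec) : bijective f -> bijective g ->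
  (forall e, endsc (g e) = (f (ends e).1, f (ends e).2) \/
             endsc (g e) = (f (ends e).2, f (ends e).1)) ->
  r3 ends = r3 endsc.
Proof.
move=> bf bg He; rewrite /r3 (bij_eq_card bg); congr (_ - _).
apply/eqP; rewrite eqn_leq (iso_le bf bg He) /=.
case: bf => f' ff' f'f; case: bg => g' gg' g'g.
have h := @iso_le Vc Ec V E endsc ends f' g'. apply: h; try by [exists f | exists g].
move=> x; have := He (g' x); rewrite g'g.
case: (endsc x) => p q /= [[-> ->] | [-> ->]]; rewrite !ff'; case: (ends _) => *; by [left|right].
Qed.

Definition dn (d : 'I_5) : nat * nat :=
  match nat_of_ord d with
  | 0 => (0, 1) | 1 => (0, 2) | 2 => (1, 2) | 3 => (1, 3) | _ => (2, 3) end.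

Lemma de1 d (t : 'I_4) : ((diamond_ends d).1 == t) = ((dn d).1 == t).
Proof. by case: d => [[|[|[|[|[|?]]]]] ?] //=; rewrite -val_eqE /= inordK. Qed.
Lemma de2 d (t : 'I_4) : ((diamond_ends d).2 == t) = ((dn d).2 == t).
Proof. by case: d => [[|[|[|[|[|?]]]]] ?] //=; rewrite -val_eqE /= inordK. Qed.

Section Rep.
Variables (V' E' : finType) (ends' : E' -> V' * V') (a : E') (k : nat).
Local Notation G := (rep_ends ends' a k).
Local Notation u := (ends' a).1.
Local Notation v := (ends' a).2.

Lemma inc_oo x e0 : incident G (inl x) (inl (inl e0)) = incident ends' x (val e0).
Proof. by []. Qed.
Lemma inc_od x p : incident G (inl x) (inl (inr p)) = false.
Proof. by case: p. Qed.
Lemma inc_oc x (i : 'I_k.+2) : incident G (inl x) (inr i) =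
  ((i == 0 :> nat) && (u == x)) || ((i == k.+1 :> nat) && (v == x)).
Proof.
rewrite /incident /= /connector_ends /=.
by case: (i == 0 :> nat); case: (i == k.+1 :> nat).
Qed.
Lemma inc_do j t e0 : incident G (inr (j, t)) (inl (inl e0)) = false.
Proof. by []. Qed.
Lemma inc_dd j t j' d : incident G (inr (j, t)) (inl (inr (j', d))) =
  (j' == j) && (((dn d).1 == t :> nat) || ((dn d).2 == t :> nat)).
Proof.
rewrite /incident /= -!de1 -!de2.
have E : forall p q, (inr p == inr q :> rep_vert V' k) = (p == q) by [].
by rewrite !E !xpair_eqE; case: (j' == j).
Qed.
Lemma inc_dc j (t : 'I_4) (i : 'I_k.+2) : incident G (inr (j, t)) (inr i) =
  ((i != 0 :> nat) && (i.-1 == j :> nat) && (t == 3 :> nat)) ||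
  ((i != k.+1 :> nat) && (i == j :> nat) && (t == 0 :> nat)).
Proof.
rewrite /incident /= /connector_ends /=.
have Hi := ltn_ord i.
have E : forall p q, (inr p == inr q :> rep_vert V' k) = (p == q) by [].
case H0: (i == 0 :> nat); case Hk: (i == k.+1 :> nat) => /=;
  move/eqP: H0 => H0; move/eqP: Hk => Hk; rewrite ?E ?xpair_eqE -?val_eqE /= ?inordK //; try lia.
by rewrite [3 == _]eq_sym; case: (_ && _).
Qed.

Local Notation Ed := ({e : E' | e != a} + ('I_k.+1 * 'I_5) + 'I_k.+2)%type.

Definition shift (al : 'I_3) (o : nat) : 'I_3 := inord ((al + o) %% 3).
Definition off (d : 'I_5) : nat :=
  match nat_of_ord d with 0 => 1 | 1 => 2 | 2 => 0 | 3 => 2 | _ => 1 end.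

Lemma shift_eq al o1 o2 : o1 < 3 -> o2 < 3 -> (shift al o1 == shift al o2) = (o1 == o2).
Proof.
move=> h1 h2; rewrite -val_eqE /= !inordK ?ltn_pmod //.
by rewrite eqn_modDl !modn_small.
Qed.
Lemma shift0 al : shift al 0 = al.
Proof. by apply: val_inj; rewrite /= inordK ?ltn_pmod // addn0 modn_small. Qed.
Lemma off_lt d : off d < 3.
Proof. by case: d => [[|[|[|[|[|?]]]]] ?]. Qed.

Lemma diam_ok (t : 'I_4) d1 d2 : d1 != d2 ->
  ((dn d1).1 == t :> nat) || ((dn d1).2 == t :> nat) ->
  ((dn d2).1 == t :> nat) || ((dn d2).2 == t :> nat) -> off d1 != off d2.
Proof.
by case: t => [[|[|[|[|?]]]] ?] //; case: d1 => [[|[|[|[|[|?]]]]] ?] //;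
  case: d2 => [[|[|[|[|[|?]]]]] ?].
Qed.
Lemma diam_ok2 (t : 'I_4) d : (t == 0 :> nat) || (t == 3 :> nat) ->
  ((dn d).1 == t :> nat) || ((dn d).2 == t :> nat) -> off d != 0.
Proof.
by case: t => [[|[|[|[|?]]]] ?] //; case: d => [[|[|[|[|[|?]]]]] ?].
Qed.

Lemma sub_card (B : {set E'}) :
  #|[set e0 : {e : E' | e != a} | val e0 \in B]| = #|B :\ a|.
Proof.
rewrite -(card_imset _ val_inj) (_ : val @: _ = B :\ a) //; apply/setP => e; rewrite !inE.
apply/imsetP/andP => [[e0]|[Hea HeB]].
- by rewrite inE => H ->; rewrite (valP e0).
- by exists (exist _ e Hea); rewrite ?inE.
Qed.

Lemma ge_step (S' : {set E'}) : cubic ends' -> colorable3 ends' S' ->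
  exists S : {set Ed}, colorable3 G S /\ #|S| = #|S'| + (6 * k + 6).
Proof.
move=> [Hloop Hdeg] HS'.
case: (colorableE HS') => c' Hc'.
have [al [Hal1 Hal2]] : exists al : 'I_3, (a \in S' -> al = c' a) /\
  (forall e, e \in S' -> e != a -> incident ends' v e -> c' e != al).
  case Ha: (a \in S').
  - exists (c' a); split=> // e He Hea Hv; apply: (Hc' v) => //.
    by rewrite /incident eqxx orbT.
  - set C := c' @: [set e | (e \in S') && incident ends' v e].
    have HC : #|C| < 3.
      apply: leq_ltn_trans (leq_imset_card _ _) _.
      apply: (@leq_ltn_trans #|[set e | incident ends' v e] :\ a|).
        apply: subset_leq_card; apply/subsetP => e; rewrite !inE => /andP [He ->].
        by rewrite andbT; apply: contraTneq He => ->; rewrite Ha.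
      have := cardsD1 a [set e | incident ends' v e].
      by rewrite Hdeg inE /incident eqxx orbT => ->.
    have : 0 < #|~: C|.
      by have := cardsC C; rewrite card_ord; lia.
    case/card_gt0P => al; rewrite inE => Hal.
    exists al; split => // e He _ Hv; apply: contraNneq Hal => <-.
    by apply/imsetP; exists e; rewrite // inE He Hv.
pose S := [set x : Ed | match x with inl (inl e0) => val e0 \in S'
   | inl (inr _) => true | inr i => (i != 0 :> nat) || (a \in S') end].
pose c : {ffun Ed -> 'I_3} := [ffun x : Ed => match x with inl (inl e0) => c' (val e0)
   | inl (inr (_, d)) => shift al (off d) | inr _ => al end].
have oc : forall x0 (e0 : {e : E' | e != a}) (i : 'I_k.+2), val e0 \in S' ->
    (i != 0 :> nat) || (a \in S') -> incident ends' x0 (val e0) ->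
    incident G (inl x0) (inr i) -> c' (val e0) != al.
  move=> x0 e0 i He Hi Ie; rewrite inc_oc.
  case/orP => /andP [/eqP Hi0 /eqP Hu].
  - move: Hi; rewrite Hi0 /= => Ha; rewrite (Hal1 Ha).
    apply: (Hc' x0) => //; first exact: (valP e0).
    by rewrite /incident Hu eqxx.
  - by apply: Hal2 => //; [exact: (valP e0) | rewrite Hu].
exists S; split.
- apply: (@colorableI (rep_vert V' k) Ed G S c) => w x y Hx Hy Hxy Iwx Iwy; rewrite !ffunE.
  move: Hx Hy; rewrite !inE.
  case: w Iwx Iwy => [x0 | [j t]].
  + case: x Hxy => [[e0 | [j1 d1]] | i1]; case: y => [[f0 | [j2 d2]] | i2];
      rewrite ?inc_od //.
    * rewrite !inc_oo => Hxy I1 I2 H1 H2; apply: (Hc' x0) => //.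
    * move=> _ I1 I2 H1 H2; exact: (oc x0 _ _ H1 H2 I1 I2).
    * move=> _ I1 I2 H1 H2; rewrite eq_sym; exact: (oc x0 _ _ H2 H1 I2 I1).
    * rewrite !inc_oc => Hxy I1 I2 _ _; exfalso.
      case/orP: I1 => /andP [/eqP H1 /eqP H1']; case/orP: I2 => /andP [/eqP H2 /eqP H2'];
      first [by move/eqP: Hxy; apply; congr inr; apply: val_inj; rewrite /= H1 H2
                 | by move: (Hloop a); rewrite H1' H2' eqxx].
  + case: x Hxy => [[e0 | [j1 d1]] | i1]; case: y => [[f0 | [j2 d2]] | i2];
      rewrite ?inc_do //.
    * rewrite !inc_dd => Hxy /andP [/eqP E1 I1] /andP [/eqP E2 I2] _ _.
      rewrite shift_eq ?off_lt //; apply: (diam_ok (t := t)) => //.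
      by apply: contra Hxy => /eqP ->; rewrite E1 E2.
    * rewrite inc_dd inc_dc => _ /andP [_ I1] I2 _ _.
      rewrite -{2}(shift0 al) shift_eq ?off_lt //; apply: (diam_ok2 (t := t)) => //.
      by case/orP: I2 => /andP [_ ->]; rewrite ?orbT.
    * rewrite inc_dd inc_dc => _ I2 /andP [_ I1] _ _.
      rewrite eq_sym -{2}(shift0 al) shift_eq ?off_lt //; apply: (diam_ok2 (t := t)) => //.
      by case/orP: I2 => /andP [_ ->]; rewrite ?orbT.
    * rewrite !inc_dc => Hxy I1 I2 _ _; exfalso.
      have : (i1 : nat) != i2 by rewrite val_eqE.
      move: I1 I2; lia.
rewrite card_set_sum card_set_sum.
have -> : #|[set x0 : {e : E' | e != a} | inl x0 \in [set x | inl x \in S]]| = #|S' :\ a|.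
  by rewrite -sub_card; apply: eq_card => e0; rewrite !inE.
have -> : #|[set p : 'I_k.+1 * 'I_5 | inr p \in [set x | inl x \in S]]| = k.+1 * 5.
  have -> : [set p : 'I_k.+1 * 'I_5 | inr p \in [set x | inl x \in S]] = setT.
    by apply/setP => p; rewrite !inE.
  by rewrite cardsT card_prod !card_ord.
have -> : #|[set y : 'I_k.+2 | inr y \in S]| = k.+1 + (a \in S').
  case Ha: (a \in S').
  - have -> : [set y : 'I_k.+2 | inr y \in S] = setT.
      by apply/setP => p; rewrite !inE Ha orbT.
    by rewrite cardsT card_ord addn1.
  - have -> : [set y : 'I_k.+2 | inr y \in S] = [set~ ord0].
      by apply/setP => p; rewrite !inE Ha orbF -val_eqE.
    by rewrite cardsC1 card_ord addn0.
rewrite (cardsD1 a S'); lia.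
Qed.

Lemma I3_third (a0 b c d : 'I_3) : a0 != b -> a0 != c -> b != c -> d != a0 -> d != b -> d = c.
Proof. move: a0 b c d; do 4! case=> [[|[|[|?]]] ?] //; by move=> *; apply: val_inj. Qed.

Lemma neq_dd (j : 'I_k.+1) d1 d2 : d1 != d2 -> (inl (inr (j,d1)) : Ed) != inl (inr (j,d2)).
Proof. by move=> H; apply: contra H => /eqP [->]. Qed.
Lemma neq_dc p (i : 'I_k.+2) : (inl (inr p) : Ed) != inr i.
Proof. by []. Qed.
Lemma neq_cc (i1 i2 : 'I_k.+2) : (i1 : nat) != i2 -> (inr i1 : Ed) != inr i2.
Proof. by move=> H; apply: contra H => /eqP [->]. Qed.

Ltac incd Hn1 Hn2 Hj := first [by rewrite inc_dd /= eqxx | rewrite inc_dc /= ?Hn1 ?Hn2 Hj; lia].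
Ltac dist := first [apply: neq_dd; done | exact: neq_dc | rewrite eq_sym; exact: neq_dc].
Ltac memb Hd Hcc := first [exact: Hd | exact: Hcc].
Ltac ne Hc Hd Hcc Hn1 Hn2 Hj j t := apply: (Hc (inr (j, @Ordinal 4 t isT)));
  [memb Hd Hcc | memb Hd Hcc | dist | incd Hn1 Hn2 Hj | incd Hn1 Hn2 Hj].

Lemma parity (S : {set Ed}) (c : {ffun Ed -> 'I_3}) :
  (forall w x y, x \in S -> y \in S -> x != y ->
     incident G w x -> incident G w y -> c x != c y) ->
  (forall p, inl (inr p) \in S) -> (forall i, inr i \in S) ->
  forall n, n <= k.+1 -> c (inr (inord n)) = c (inr ord0).
Proof.
move=> Hc Hd Hcc.
have step : forall n, n <= k -> c (inr (inord n.+1)) = c (inr (inord n)).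
  move=> n Hn.
  pose j : 'I_k.+1 := inord n.
  pose O5 m (H : m < 5) := Ordinal H.
  pose T4 m (H : m < 4) := Ordinal H.
  have Hj : (j : nat) = n by rewrite inordK.
  have Hn1 : ((inord n : 'I_k.+2) : nat) = n by rewrite inordK //; lia.
  have Hn2 : ((inord n.+1 : 'I_k.+2) : nat) = n.+1 by rewrite inordK //; lia.
  pose x0 := c (inr (inord n)).
  pose x1 := c (inr (inord n.+1)).
  pose d0 := c (inl (inr (j, O5 0 isT))).
  pose d1 := c (inl (inr (j, O5 1 isT))).
  pose d2 := c (inl (inr (j, O5 2 isT))).
  pose d3 := c (inl (inr (j, O5 3 isT))).
  pose d4 := c (inl (inr (j, O5 4 isT))).
  have DD : forall t m1 m2 (H1 : m1 < 5) (H2 : m2 < 5), m1 != m2 ->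
     incident G (inr (j, t)) (inl (inr (j, O5 m1 H1))) ->
     incident G (inr (j, t)) (inl (inr (j, O5 m2 H2))) ->
     c (inl (inr (j, O5 m1 H1))) != c (inl (inr (j, O5 m2 H2))).
    move=> t m1 m2 H1 H2 Hm I1 I2; apply: (Hc (inr (j, t))) => //.
    exact: neq_dd.
  have ns : forall x y : 'I_3, x != y -> y != x by move=> ? ?; rewrite eq_sym.
  have e1 : x0 != d0 by ne Hc Hd Hcc Hn1 Hn2 Hj j 0.
  have e2 : x0 != d1 by ne Hc Hd Hcc Hn1 Hn2 Hj j 0.
  have e3 : d0 != d1 by ne Hc Hd Hcc Hn1 Hn2 Hj j 0.
  have e4 : d0 != d2 by ne Hc Hd Hcc Hn1 Hn2 Hj j 1.
  have e5 : d0 != d3 by ne Hc Hd Hcc Hn1 Hn2 Hj j 1.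
  have e6 : d2 != d3 by ne Hc Hd Hcc Hn1 Hn2 Hj j 1.
  have e7 : d1 != d2 by ne Hc Hd Hcc Hn1 Hn2 Hj j 2.
  have e8 : d1 != d4 by ne Hc Hd Hcc Hn1 Hn2 Hj j 2.
  have e9 : d2 != d4 by ne Hc Hd Hcc Hn1 Hn2 Hj j 2.
  have e10 : d3 != d4 by ne Hc Hd Hcc Hn1 Hn2 Hj j 3.
  have e11 : d3 != x1 by ne Hc Hd Hcc Hn1 Hn2 Hj j 3.
  have e12 : d4 != x1 by ne Hc Hd Hcc Hn1 Hn2 Hj j 3.
  have f2 : d2 = x0 by apply: I3_third e3 (ns _ _ e1) (ns _ _ e2) (ns _ _ e4) (ns _ _ e7).
  have e6' : d3 != x0 by rewrite -f2 eq_sym.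
  have f3 : d3 = d1 := I3_third (ns _ _ e1) e3 e2 (ns _ _ e5) e6'.
  have e9' : d4 != x0 by rewrite -f2 eq_sym.
  have f4 : d4 = d0 := I3_third (ns _ _ e2) (ns _ _ e3) e1 (ns _ _ e8) e9'.
  have e11' : x1 != d1 by rewrite -f3 eq_sym.
  have e12' : x1 != d0 by rewrite -f4 eq_sym.
  exact: I3_third (ns _ _ e3) (ns _ _ e2) (ns _ _ e1) e11' e12'.
have base : (inord 0 : 'I_k.+2) = ord0 by apply: val_inj; rewrite /= inordK.
elim=> [|n IH] Hn; first by rewrite base.
by rewrite step ?IH //; lia.
Qed.

Lemma le_step (S : {set Ed}) : colorable3 G S ->
  exists S' : {set E'}, colorable3 ends' S' /\ #|S| <= #|S'| + (6 * k + 6).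
Proof.
move=> HS; case: (colorableE HS) => c Hc.
pose allnew := [forall p, inl (inr p) \in S] && [forall i, inr i \in S].
pose S' := [set e : E' | if insub e is Some e0 then inl (inl e0) \in S else allnew].
pose c' : {ffun E' -> 'I_3} :=
  [ffun e : E' => if insub e is Some e0 then c (inl (inl e0)) else c (inr ord0)].
have key : forall e : E', (exists e0 : {x : E' | x != a}, e = val e0 /\ insub e = Some e0)
    \/ (e = a /\ insub e = None :> option {x : E' | x != a}).
  move=> e; case: (eqVneq e a) => [->|Hea]; [right | left].
  - by split => //; rewrite insubF // eqxx.
  - by exists (exist _ e Hea); rewrite insubT.
have oa : forall w e0, inl (inl e0) \in S -> allnew -> incident ends' w (val e0) ->
    incident ends' w a -> c (inl (inl e0)) != c (inr ord0).
  move=> w e0 He /andP [/forallP Hd /forallP Hcc] Ie.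
  rewrite /incident => /orP [/eqP Hu | /eqP Hv].
  - apply: (Hc (inl w)) => //.
    by rewrite inc_oc /= Hu eqxx.
  - rewrite -(parity Hc Hd Hcc (leqnn k.+1)).
    apply: (Hc (inl w)) => //.
    by rewrite inc_oc inordK //= Hv !eqxx ?orbT.
exists S'; split.
- apply: (@colorableI V' E' ends' S' c') => w e f He Hf Hef Ie If; rewrite !ffunE.
  move: He Hf; rewrite !inE.
  case: (key e) => [[e0 [Ee Ie0]] | [Ee Ie0]]; case: (key f) => [[f0 [Ef If0]] | [Ef If0]]; rewrite ?Ie0 ?If0.
  + move=> He Hf; apply: (Hc (inl w)) => //.
    * by apply: contra Hef => /eqP [Eq]; rewrite Ee Ef Eq.
    * by rewrite inc_oo -Ee.
    * by rewrite inc_oo -Ef.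
  + by move=> He Hf; apply: (oa w) => //; rewrite -?Ee -?Ef.
  + by move=> He Hf; rewrite eq_sym; apply: (oa w) => //; rewrite -?Ee -?Ef.
  + by move: Hef; rewrite Ee Ef eqxx.
rewrite card_set_sum card_set_sum.
have -> : #|[set x0 : {e : E' | e != a} | inl x0 \in [set x | inl x \in S]]| = #|S' :\ a|.
  by rewrite -sub_card; apply: eq_card => e0; rewrite !inE valK.
rewrite (cardsD1 a S').
have -> : (a \in S') = allnew by rewrite inE insubF ?eqxx.
set D := [set p : 'I_k.+1 * 'I_5 | inr p \in [set x | inl x \in S]].
set C := [set y : 'I_k.+2 | inr y \in S].
have HD : #|D| + #|~: D| = k.+1 * 5 by rewrite cardsC card_prod !card_ord.
have HC : #|C| + #|~: C| = k.+2 by rewrite cardsC card_ord.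
have Hall : ~~ allnew -> 0 < #|~: D| + #|~: C|.
  rewrite negb_and => /orP [/forallPn [p Hp] | /forallPn [i Hi]].
  - have : 0 < #|~: D| by apply/card_gt0P; exists p; rewrite !inE.
    lia.
  - have : 0 < #|~: C| by apply/card_gt0P; exists i; rewrite !inE.
    lia.
have [Ha|Ha] := boolP allnew.
- rewrite add1n; lia.
- have := Hall Ha; rewrite add0n; lia.
Qed.

Lemma nu3_rep : cubic ends' -> nu3 G = nu3 ends' + (6 * k + 6).
Proof.
move=> Hcub; apply/eqP; rewrite eqn_leq; apply/andP; split.
- apply/bigmax_leqP => S HS; case: (le_step HS) => S' [HS' Hle].
  apply: leq_trans Hle _; rewrite leq_add2r; exact: leq_bigmax_cond.
- have : nu3 ends' <= nu3 G - (6 * k + 6).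
    apply/bigmax_leqP => S' HS'; case: (ge_step Hcub HS') => S [HS Heq].
    have : #|S| <= nu3 G by exact: leq_bigmax_cond.
    lia.
  have : 6 * k + 6 <= nu3 G.
    have H0 : colorable3 ends' set0.
      by apply/existsP; exists [ffun=> ord0]; apply/forallP => e; rewrite inE.
    case: (ge_step Hcub H0) => S [HS Heq].
    have : #|S| <= nu3 G by exact: leq_bigmax_cond.
    lia.
  lia.
Qed.

Lemma card_Ed : #|{: Ed}| = #|E'|.-1 + k.+1 * 5 + k.+2.
Proof.
rewrite !card_sum card_prod !card_ord card_sig -(cardC1 a).
by congr (_ + _ + _); apply: eq_card.
Qed.

Lemma r3_rep : cubic ends' -> r3 G = r3 ends'.
Proof.
move=> Hc; rewrite /r3 nu3_rep //.
have : 0 < #|E'| by apply/card_gt0P; exists a.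
have -> : #|{: Ed}| = #|E'|.-1 + k.+1 * 5 + k.+2 by exact: card_Ed.
lia.
Qed.
End Rep.

Theorem lemma2 (V' E' : finType) (ends' : E' -> V' * V') (a : E') (k : nat)
  (V E : finType) (ends : E -> V * V) :
  cubic ends' ->
  cubic ends ->
  mgraph_iso ends (rep_ends ends' a k) ->
  r3 ends = r3 ends'.
Proof.
move=> Hc' _ [f [g [bf bg He]]].
rewrite (iso_eq bf bg He).
exact: r3_rep.
Qed.
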